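(* Let $d\ge1$, $D=\{1,\dots,d\}$, let $\Pi=(\Pi_{ij})$ and $Q$ be $d\times d$ stochastic matrices indexed by $D$, let $\pi=(\pi_j)_{j\in D}$ be a probability vector, and let $\varphi^{(O)}_H$ be the quantum Markov chain on $\mathcal{A}_H=\bigotimes_{\mathbb{N}}\mathcal{M}_d$ with initial state $\varphi_{H,0}(\cdot)=\operatorname{Tr}(W_0\,\cdot)$, $W_0=\sum_{j\in D}\pi_je_{jj}$, and transition expectation $\mathcal{E}^{(O)}_H(a\otimes b)=a\diamond P_{H,O}(\mathbf{1}_d)\diamond P_H(b)$. Then for all $n\in\mathbb{N}$ and $j_0,\dots,j_n\in D$, $$\varphi^{(O)}_H\Big(\prod_{m=0}^nj_{H_m}(e_{j_mj_m})\Big)=\pi_{j_0}\prod_{m=0}^{n-1}\Pi_{j_mj_{m+1}}.$$ That is, the restriction of $\varphi^{(O)}_H$ to the diagonal algebra $\bigotimes_{\mathbb{N}}\mathcal{D}_e$ is the classical Markov chain with initial distribution $\pi$ and transition matrix $\Pi$.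
   Context: $\mathcal{M}_d$: complex $d\times d$ matrices with identity $\mathbf{1}_d$ and matrix units $e_{ij}$; $\mathcal{D}_e=\{\sum_hx_he_{hh}\}$ is its diagonal subalgebra. $\diamond$ is the Schur (entrywise) product; stochastic matrices have nonnegative entries and row sums $1$. $P_H(A)=\sum_{i,j,k,l\in D}\sqrt{\Pi_{ik}\Pi_{jl}}\,a_{kl}e_{ij}$, $P_{H,O}(B)=\sum_{i,j,k,l\in D}\sqrt{Q_{ik}Q_{jl}}\,b_{kl}e_{ij}$. $j_{H_m}(a)$ denotes $a$ at site $m$ of $\mathcal{A}_H$ with identities elsewhere, and $\varphi^{(O)}_H(j_{H_0}(a_0)\cdots j_{H_n}(a_n))=\varphi_{H,0}(\mathcal{E}^{(O)}_H(a_0\otimes\mathcal{E}^{(O)}_H(a_1\otimes\cdots\mathcal{E}^{(O)}_H(a_n\otimes\mathbf{1}_d)\cdots)))$. *)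

(* Defs.v *)
From mathcomp Require Import all_boot all_algebra complex.
From mathcomp Require Import reals.
Set Implicit Arguments. Unset Strict Implicit. Unset Printing Implicit Defensive.
Import GRing.Theory Num.Theory.
Local Open Scope ring_scope.

Section Defs.
Variable R : realType.
Local Notation C := (R[i]).
Variable d : nat.

Definition stochastic (P : 'M[C]_d) : Prop :=
  (forall i j, 0 <= P i j) /\ (forall i, \sum_(j < d) P i j = 1).

Definition prob_vec (p : 'rV[C]_d) : Prop :=
  (forall j, 0 <= p 0 j) /\ \sum_(j < d) p 0 j = 1.

Definition schur (A B : 'M[C]_d) : 'M[C]_d := \matrix_(i, j) (A i j * B i j).

Definition P_H (Pi A : 'M[C]_d) : 'M[C]_d :=
  \matrix_(i, j) \sum_(k < d) \sum_(l < d) sqrtC (Pi i k * Pi j l) * A k l.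

Definition P_HO (Q B : 'M[C]_d) : 'M[C]_d :=
  \matrix_(i, j) \sum_(k < d) \sum_(l < d) sqrtC (Q i k * Q j l) * B k l.

Definition E_HO (Pi Q a b : 'M[C]_d) : 'M[C]_d :=
  schur (schur a (P_HO Q 1%:M)) (P_H Pi b).

Definition W0 (p : 'rV[C]_d) : 'M[C]_d := diag_mx p.
Definition phi_H0 (p : 'rV[C]_d) (x : 'M[C]_d) : C := \tr (W0 p *m x).

(* phi^(O)_H (j_{H_0}(a_0) ... j_{H_n}(a_n))
   = phi_{H,0}(E(a_0 ⊗ E(a_1 ⊗ ... E(a_n ⊗ 1) ...))) , for as = [:: a_0; ...; a_n] *)
Definition phi_HO (p : 'rV[C]_d) (Pi Q : 'M[C]_d) (as_ : seq 'M[C]_d) : C :=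
  phi_H0 p (foldr (fun a acc => E_HO Pi Q a acc) 1%:M as_).

End Defs.

(* Main.v *)
Require Import Defs.
From mathcomp Require Import all_boot all_algebra complex.
From mathcomp Require Import reals.
Import GRing.Theory Num.Theory.
Local Open Scope ring_scope.

Section H.
Variable R : realType.
Local Notation C := (R[i]).
Variable d : nat.

Lemma dsum2 (F : 'I_d -> 'I_d -> C) (m : 'I_d) :
  \sum_(k < d) \sum_(l < d) F k l * (delta_mx m m : 'M[C]_d) k l = F m m.
Proof.
rewrite (bigD1 m) //=.
rewrite [X in _ + X]big1 => [|k km]; last first.
  by rewrite big1 // => l _; rewrite mxE (negbTE km) mulr0.
rewrite addr0 (bigD1 m) //= [X in _ + X]big1 => [|l lm].
  by rewrite !mxE !eqxx !addr0 mulr1.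
by rewrite mxE (negbTE lm) andbF mulr0.
Qed.

Lemma sumdiag (F : 'I_d -> 'I_d -> C) :
  \sum_(k < d) \sum_(l < d) F k l * (1%:M : 'M[C]_d) k l = \sum_(k < d) F k k.
Proof.
apply: eq_bigr => k _.
rewrite (bigD1 k) //= [X in _ + X]big1 => [|l lk].
  by rewrite !mxE eqxx mulr1 addr0.
by rewrite mxE eq_sym (negbTE lk) mulr0.
Qed.

Lemma sq_nonneg (P : 'M[C]_d) j k : 0 <= P j k -> sqrtC (P j k * P j k) = P j k.
Proof. by move=> h; rewrite -expr2 sqrCK. Qed.

Lemma E_delta (Pi Q B : 'M[C]_d) (j : 'I_d) :
  E_HO Pi Q (delta_mx j j) B = (P_HO Q 1%:M j j * P_H Pi B j j) *: delta_mx j j.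
Proof.
apply/matrixP => a b; rewrite !mxE.
case: (eqVneq a j) => [->|aj]; case: (eqVneq b j) => [->|bj] //=;
  rewrite ?mul0r ?mulr0 ?mulr1 ?mul1r //.
Qed.

Lemma PHO1 (Q : 'M[C]_d) j : stochastic Q -> P_HO Q 1%:M j j = 1.
Proof.
case=> hq hs; rewrite mxE sumdiag -(hs j).
by apply: eq_bigr => k _; rewrite sq_nonneg.
Qed.

Lemma PH1 (Pi : 'M[C]_d) j : stochastic Pi -> P_H Pi 1%:M j j = 1.
Proof.
case=> hq hs; rewrite mxE sumdiag -(hs j).
by apply: eq_bigr => k _; rewrite sq_nonneg.
Qed.

Lemma PHdelta (Pi : 'M[C]_d) j m c : stochastic Pi ->
  P_H Pi (c *: delta_mx m m) j j = Pi j m * c.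
Proof.
case=> hq hs; rewrite mxE.
transitivity (\sum_(k < d) \sum_(l < d) (sqrtC (Pi j k * Pi j l) * c) * (delta_mx m m : 'M[C]_d) k l).
  apply: eq_bigr => k _; apply: eq_bigr => l _; by rewrite mxE mulrA.
by rewrite dsum2 sq_nonneg.
Qed.

End H.

Theorem mainTheorem9 (R : realType) (d : nat) (hd : (0 < d)%N)
  (Pi Q : 'M[R[i]]_d) (p : 'rV[R[i]]_d)
  (hPi : stochastic Pi) (hQ : stochastic Q) (hp : prob_vec p)
  (n : nat) (js : nat -> 'I_d) :
  phi_HO p Pi Q [seq delta_mx (js m) (js m) | m <- iota 0 n.+1]
  = p 0 (js 0%N) * \prod_(m < n) Pi (js m) (js m.+1).
Proof.
have key : forall n m, foldr (fun k acc => E_HO Pi Q (delta_mx (js k) (js k)) acc) 1%:M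
    (iota m n.+1)
  = (\prod_(i < n) Pi (js (m + i)%N) (js (m + i).+1)) *: delta_mx (js m) (js m).
  elim=> [|k IH] m.
    by rewrite /= E_delta PHO1 // PH1 // big_ord0 mulr1.
  rewrite (_ : iota m k.+2 = m :: iota m.+1 k.+1) // -cat1s foldr_cat IH /= E_delta PHO1 // PHdelta // mul1r big_ord_recl.
  rewrite addn0; congr (_ * _ *: _).
  by apply: eq_bigr => i _; rewrite addSnnS.
rewrite /phi_HO foldr_map key /phi_H0 /W0.
rewrite -scalemxAr mxtraceZ mulrC.
under eq_bigr do rewrite add0n.
have -> : \tr (diag_mx p *m delta_mx (js 0%N) (js 0%N)) = p 0 (js 0%N); last by [].
rewrite mul_diag_mx /mxtrace (bigD1 (js 0%N)) //= [X in _ + X]big1 => [|i ij].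
  by rewrite !mxE !eqxx mulr1 addr0.
by rewrite !mxE (negbTE ij) mulr0.
Qed.
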